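(* Let $\mathcal{A}$ be a commutative $\sigma$-finite W*-algebra or a commutative AW*-algebra, and let $\mathcal{E}$ be a Hilbert C*-module over $\mathcal{A}$ of rank $d$. Let $\{\tau_j\}_{j=1}^n$ be a collection in $\mathcal{E}$ with $\langle\tau_j,\tau_j\rangle=1$ for all $1\leq j\leq n$. Then \[ n^2\geq \|\mathrm{MFP}(\{\tau_j\}_{j=1}^n)\|\geq \mathrm{MFP}(\{\tau_j\}_{j=1}^n)\geq \frac{n^2}{d}. \]
   Context: A W*-algebra is $\sigma$-finite if it contains at most countably many mutually orthogonal (nonzero) projections. A C*-algebra is an AW*-algebra if every set of orthogonal projections has a supremum and every maximal commutative self-adjoint subalgebra is generated by its projections. Such algebras are unital, with identity $1$. The $\mathcal{A}$-valued inner product on $\mathcal{E}$ is linear in the first variable and conjugate-linear in the second. $\mathcal{E}$ has rank $d$ if it has an orthonormal basis $\{\omega_j\}_{j=1}^d$, i.e. $\langle\omega_j,\omega_k\rangle=\delta_{jk}1$ and $x=\sum_{j=1}^d\langle x,\omega_j\rangle\omega_j$ for all $x$. The modular frame potential is $\mathrm{MFP}(\{\tau_j\}_{j=1}^n)=\sum_{j=1}^n\sum_{k=1}^n\langle \tau_j, \tau_k\rangle \langle \tau_k, \tau_j\rangle\in\mathcal{A}$. Inequalities between elements of $\mathcal{A}$ are in the order on self-adjoint elements, a real number $c$ being identified with $c\cdot1$; $\|\cdot\|$ is the C*-norm. *)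

(* Defs.v *)
From HB Require Import structures.
From mathcomp Require Import all_boot all_order all_algebra.
From mathcomp Require Import all_classical all_reals.
From mathcomp Require Export complex.
Set Implicit Arguments. Unset Strict Implicit. Unset Printing Implicit Defensive.
Import Order.TTheory GRing.Theory Num.Theory.
Local Open Scope ring_scope.
Local Open Scope classical_set_scope.

Section Defs.
Variable R : realType.
Local Notation C := (R[i]).

Definition cabs (c : C) : R :=
  Num.sqrt (complex.Re c ^+ 2 + complex.Im c ^+ 2).
Definition cconj (c : C) : C := complex.Complex (complex.Re c) (- complex.Im c).

Definition is_norm (V : lmodType C) (nv : V -> R) :=
  (forall x, 0 <= nv x) /\ (forall x, nv x = 0 -> x = 0) /\
  (forall c x, nv (c *: x) = cabs c * nv x) /\
  (forall x y, nv (x + y) <= nv x + nv y).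

Definition cvg_in (V : zmodType) (nv : V -> R) (u : nat -> V) (l : V) :=
  forall e, 0 < e -> exists N, forall m, (N <= m)%N -> nv (u m - l) < e.

Definition cauchy_in (V : zmodType) (nv : V -> R) (u : nat -> V) :=
  forall e, 0 < e -> exists N, forall m p, (N <= m)%N -> (N <= p)%N ->
    nv (u m - u p) < e.

Definition complete_in (V : zmodType) (nv : V -> R) :=
  forall u, cauchy_in nv u -> exists l, cvg_in nv u l.

Definition banach (V : lmodType C) (nv : V -> R) := is_norm nv /\ complete_in nv.

Definition clinear_functional (V : lmodType C) (f : V -> C) :=
  forall c v w, f (c *: v + w) = c * f v + f w.

Section CStar.
Variables (A : comAlgType C) (star : A -> A) (nrm : A -> R).

Definition is_CStar :=
  banach nrm /\
  (forall x y, nrm (x * y) <= nrm x * nrm y) /\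
  (forall x y, star (x + y) = star x + star y) /\
  (forall c x, star (c *: x) = cconj c *: star x) /\
  (forall x y, star (x * y) = star y * star x) /\
  (forall x, star (star x) = x) /\
  (forall x, nrm (star x * x) = nrm x ^+ 2).

Definition self_adjoint (a : A) := star a = a.
Definition cpos (a : A) := exists b, a = star b * b.
Definition cle (a b : A) := [/\ self_adjoint a, self_adjoint b & cpos (b - a)].
Definition rA (r : R) : A := ((r%:C)%C)%:A.

Definition projection (p : A) := p * p = p /\ star p = p.
Definition orth_proj_family (S : set A) :=
  (forall p, S p -> projection p) /\
  (forall p q, S p -> S q -> p <> q -> p * q = 0).

Definition sigma_finite :=
  forall S : set A, orth_proj_family S -> (forall p, S p -> p <> 0) -> countable S.

(* W*-algebra (Sakai): the C*-algebra is, as a Banach space, the dual of some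
   Banach space V, i.e. there is an isometric linear bijection phi from A onto
   the bounded linear functionals on V. *)
Definition W_star :=
  exists (V : lmodType C) (nv : V -> R) (phi : A -> V -> C),
    banach nv /\
    (forall a, clinear_functional (phi a)) /\
    (forall c a b v, phi (c *: a + b) v = c * phi a v + phi b v) /\
    (forall a v, cabs (phi a v) <= nrm a * nv v) /\
    (forall a e, 0 < e -> exists v, nv v <= 1 /\ nrm a - e < cabs (phi a v)) /\
    (forall f : V -> C, clinear_functional f ->
       (exists M, forall v, cabs (f v) <= M * nv v) -> exists a, phi a = f).

Definition is_sup_proj (S : set A) (p : A) :=
  [/\ projection p, (forall q, S q -> cle q p) &
      (forall r, projection r -> (forall q, S q -> cle q r) -> cle p r)].

Definition star_subalg (B : set A) :=
  B 0 /\ (forall x y, B x -> B y -> B (x + y) /\ B (x * y)) /\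
  (forall c x, B x -> B (c *: x)) /\ (forall x, B x -> B (star x)).

Definition comm_set (B : set A) := forall x y, B x -> B y -> x * y = y * x.

Definition max_comm_star_subalg (B : set A) :=
  [/\ star_subalg B, comm_set B &
      forall B', star_subalg B' -> comm_set B' -> B `<=` B' -> B' = B].

Definition norm_closed (B : set A) :=
  forall u l, (forall m, B (u m)) -> cvg_in nrm u l -> B l.

Definition gen_Cstar (P : set A) : set A :=
  \bigcap_(S in [set S | [/\ star_subalg S, norm_closed S & P `<=` S]]) S.

Definition AW_star :=
  (forall S, orth_proj_family S -> exists p, is_sup_proj S p) /\
  (forall B, max_comm_star_subalg B -> B = gen_Cstar (B `&` projection)).

(* E : lmodType A (A is commutative, so left = right module); the C-vector
   space structure is c *: x := c%:A *: x. *)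
Section Module.
Variables (E : lmodType A) (ip : E -> E -> A).

Definition hilbert_module :=
  (forall a x y z, ip (a *: x + y) z = a * ip x z + ip y z) /\
  (forall x y, ip y x = star (ip x y)) /\
  (forall x, cpos (ip x x)) /\
  (forall x, ip x x = 0 -> x = 0) /\
  complete_in (fun x : E => Num.sqrt (nrm (ip x x))).

Definition has_rank (d : nat) :=
  exists w : 'I_d -> E,
    (forall j k, ip (w j) (w k) = (j == k)%:R) /\
    (forall x, x = \sum_(j < d) ip x (w j) *: w j).

Definition MFP (n : nat) (t : 'I_n -> E) : A :=
  \sum_(j < n) \sum_(k < n) ip (t j) (t k) * ip (t k) (t j).

End Module.
End CStar.
End Defs.
Arguments rA {R A} r.

(* Main.v *)
Require Import Defs.
From HB Require Import structures.
From mathcomp Require Import all_boot all_order all_algebra.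
From mathcomp Require Import all_classical all_reals.
From mathcomp Require Import complex.
From mathcomp Require Import ring lra.
Import Order.TTheory GRing.Theory Num.Theory.
Local Open Scope ring_scope.
Set Implicit Arguments. Unset Strict Implicit. Unset Printing Implicit Defensive.
Lemma mono_cauchy_real (R : realType) (r : nat -> R) (B : R) :
  (forall k, r k <= r k.+1) -> (forall k, r k <= B) ->
  forall e, 0 < e -> exists N, forall m, (N <= m)%N -> r m - r N < e.
Proof.
move=> inc bnd e e0.
have hs : has_sup [set x | exists k, r k = x].
  split; first by exists (r 0%N); exists 0%N.
  by exists B => _ [k <-].
have [x [N <-] HN] := sup_adherent e0 hs.
exists N => m _.
have : r m <= sup [set x | exists k, r k = x].
  apply: ub_le_sup; last by exists m.
  by exists B => _ [k <-].
lra.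
Qed.

Lemma mono_le (R : realType) (r : nat -> R) :
  (forall k, r k <= r k.+1) -> forall k m, (k <= m)%N -> r k <= r m.
Proof.
move=> inc k m km.
exact: (homo_leq (r := fun a b => a <= b) (@lexx _ _) (fun y x z => @le_trans _ _ y x z) inc km).
Qed.

Section CS.
Variable R : realType.
Local Notation C := R[i].
Variables (A : comAlgType C) (star : A -> A) (nrm : A -> R).
Hypothesis HC : is_CStar star nrm.

Lemma nrm_ge0 x : 0 <= nrm x.
Proof. by case: HC => [[[+ _] _] _] => h; apply: h. Qed.
Lemma nrm_eq0 x : nrm x = 0 -> x = 0.
Proof. by case: HC => [[[_ [h _]] _] _]; apply: h. Qed.
Lemma nrmZ c x : nrm (c *: x) = cabs c * nrm x.
Proof. by case: HC => [[[_ [_ [h _]]] _] _]; apply: h. Qed.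
Lemma nrmD x y : nrm (x + y) <= nrm x + nrm y.
Proof. by case: HC => [[[_ [_ [_ h]]] _] _]; apply: h. Qed.
Lemma nrm_complete : complete_in nrm.
Proof. by case: HC => [[_ h] _]. Qed.
Lemma nrmM x y : nrm (x * y) <= nrm x * nrm y.
Proof. by case: HC => [_ [h _]]; apply: h. Qed.
Lemma starD x y : star (x + y) = star x + star y.
Proof. by case: HC => [_ [_ [h _]]]; apply: h. Qed.
Lemma starZ c x : star (c *: x) = cconj c *: star x.
Proof. by case: HC => [_ [_ [_ [h _]]]]; apply: h. Qed.
Lemma starM x y : star (x * y) = star y * star x.
Proof. by case: HC => [_ [_ [_ [_ [h _]]]]]; apply: h. Qed.
Lemma starK x : star (star x) = x.
Proof. by case: HC => [_ [_ [_ [_ [_ [h _]]]]]]; apply: h. Qed.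
Lemma nrmCS x : nrm (star x * x) = nrm x ^+ 2.
Proof. by case: HC => [_ [_ [_ [_ [_ [_ h]]]]]]; apply: h. Qed.

Lemma star0 : star 0 = 0.
Proof. by have := starD 0 0; rewrite addr0 => /eqP; rewrite -subr_eq subrr eq_sym => /eqP. Qed.
Lemma starN x : star (- x) = - star x.
Proof. by apply/eqP; rewrite -subr_eq0 opprK -starD addNr star0. Qed.
Lemma starB x y : star (x - y) = star x - star y.
Proof. by rewrite starD starN. Qed.
Lemma star1 : star 1 = 1.
Proof.
have h : forall x, star 1 * x = x.
  by move=> x; rewrite -{2}(starK x) -[star x]mul1r starM starK mulrC.
by rewrite -[star 1]mulr1 h.
Qed.
Lemma star_sum (I : Type) (s : seq I) (P : pred I) (F : I -> A) :
  star (\sum_(i <- s | P i) F i) = \sum_(i <- s | P i) star (F i).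
Proof.
elim/big_rec2: _ => [|i y1 y2 _ <-]; first exact: star0.
by rewrite starD.
Qed.

Lemma cabs_real (r : R) : cabs (r%:C)%C = `|r|.
Proof. by rewrite /cabs /= expr0n /= addr0 sqrtr_sqr. Qed.
Lemma cconj_real (r : R) : cconj (r%:C)%C = (r%:C)%C.
Proof. by rewrite /cconj /= oppr0. Qed.

Lemma nrm0 : nrm 0 = 0.
Proof. have e : (0 : C) = ((0:R)%:C)%C by rewrite rmorph0.
by rewrite -(scale0r (0:A)) nrmZ e cabs_real normr0 mul0r. Qed.
Lemma nrmN x : nrm (- x) = nrm x.
Proof.
have e : (-1 : C) = ((-1:R)%:C)%C by rewrite rmorphN1.
by rewrite -scaleN1r nrmZ e cabs_real normrN normr1 mul1r.
Qed.
Lemma nrmB x y : nrm (x - y) = nrm (y - x).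
Proof. by rewrite -nrmN opprB. Qed.

Lemma nrm_star x : nrm (star x) = nrm x.
Proof.
have key : forall x, nrm x <= nrm (star x).
  move=> z; have := nrmCS z; have := nrmM (star z) z.
  have := nrm_ge0 z; have := nrm_ge0 (star z).
  case: (eqVneq (nrm z) 0) => [->|nz]; first by [].
  move=> h1 h2 h3 h4; rewrite h4 expr2 in h3.
  have hz : 0 < nrm z by rewrite lt_def nz h2.
  by rewrite -(ler_pM2r hz).
by apply/eqP; rewrite eq_le key -{2}(starK x) key.
Qed.

Lemma nrm1 : nrm 1 = 1.
Proof.
have h := nrmCS 1; rewrite star1 mulr1 in h.
have nz : nrm 1 != 0.
  by apply/eqP => /nrm_eq0 /eqP; rewrite oner_eq0.
move: h; rewrite expr2 => /eqP; rewrite -subr_eq0 -{1}(mulr1 (nrm 1)) -mulrBr mulf_eq0.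
by rewrite (negbTE nz) /= subr_eq0 eq_sym => /eqP.
Qed.

Lemma nrm_sa_sq x : star x = x -> nrm (x * x) = nrm x ^+ 2.
Proof. by move=> h; rewrite -nrmCS h. Qed.

Lemma nrm_sum (I : Type) (s : seq I) (P : pred I) (F : I -> A) :
  nrm (\sum_(i <- s | P i) F i) <= \sum_(i <- s | P i) nrm (F i).
Proof.
elim/big_rec2: _ => [|i y1 y2 _ h]; first by rewrite nrm0.
by apply: le_trans (nrmD _ _) _; rewrite lerD2l.
Qed.

Lemma rA_mul (a b : R) : rA (a * b) = rA a * rA b :> A.
Proof. by rewrite /rA rmorphM /= -scalerAl mul1r scalerA. Qed.
Lemma rA_add (a b : R) : rA (a + b) = rA a + rA b :> A.
Proof. by rewrite /rA rmorphD /= scalerDl. Qed.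
Lemma rA_opp (a : R) : rA (- a) = - rA a :> A.
Proof. by rewrite /rA rmorphN /= scaleNr. Qed.
Lemma rA1 : rA 1 = 1 :> A.
Proof. by rewrite /rA rmorph1 scale1r. Qed.
Lemma rA0 : rA 0 = 0 :> A.
Proof. by rewrite /rA rmorph0 scale0r. Qed.
Lemma rA_nat k : rA k%:R = k%:R :> A.
Proof. by rewrite /rA rmorph_nat scaler_nat. Qed.
Lemma star_rA r : star (rA r) = rA r.
Proof. by rewrite /rA starZ cconj_real star1. Qed.
Lemma nrm_rAM r x : nrm (rA r * x) = `|r| * nrm x.
Proof. by rewrite /rA -scalerAl mul1r nrmZ cabs_real. Qed.
Lemma nrm_rA r : nrm (rA r) = `|r|.
Proof. by rewrite -[rA r]mulr1 nrm_rAM nrm1 mulr1. Qed.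

End CS.
Section Lim.
Variable R : realType.
Local Notation C := R[i].
Variables (A : comAlgType C) (star : A -> A) (nrm : A -> R).
Hypothesis HC : is_CStar star nrm.

Local Notation cv := (cvg_in nrm).

Lemma small_le0 (x : R) : (forall e, 0 < e -> x <= e) -> x <= 0.
Proof.
move=> h; rewrite leNgt; apply/negP => x0.
by have := h (x / 2%:R); lra.
Qed.

Lemma cv_uniq u l l' : cv u l -> cv u l' -> l = l'.
Proof.
move=> h1 h2; apply/eqP; rewrite -subr_eq0; apply/eqP; apply: (nrm_eq0 HC).
apply/eqP; rewrite eq_le (nrm_ge0 HC) // andbT; apply: small_le0 => e e0.
have e2 : 0 < e / 2%:R by lra.
have [N1 H1] := h1 _ e2; have [N2 H2] := h2 _ e2.
have := H1 (maxn N1 N2) (leq_maxl _ _); have := H2 (maxn N1 N2) (leq_maxr _ _).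
set v := u _ => a b.
have : nrm (l - l') <= nrm (l - v) + nrm (v - l').
  by apply: le_trans (nrmD HC _ _); rewrite addrA subrK.
rewrite (nrmB HC l v); lra.
Qed.

Lemma cv_le u l B : (forall k, nrm (u k) <= B) -> cv u l -> nrm l <= B.
Proof.
move=> hb hc; rewrite -subr_le0; apply: small_le0 => e e0.
have [N HN] := hc _ e0; have := HN N (leqnn N); have := hb N.
have : nrm l <= nrm (l - u N) + nrm (u N).
  by apply: le_trans (nrmD HC _ _); rewrite subrK.
rewrite (nrmB HC l (u N)); lra.
Qed.

Lemma cv_shift u l : cv u l -> cv (fun k => u k.+1) l.
Proof. by move=> h e e0; have [N HN] := h e e0; exists N => m hm; apply: HN; apply: leqW. Qed.

Lemma cv_ext u v l : (forall k, u k = v k) -> cv u l -> cv v l.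
Proof. by move=> E h e e0; have [N HN] := h e e0; exists N => m hm; rewrite -E; apply: HN. Qed.

Lemma cvD u v l m : cv u l -> cv v m -> cv (fun k => u k + v k) (l + m).
Proof.
move=> h1 h2 e e0.
have e2 : 0 < e / 2%:R by lra.
have [N1 H1] := h1 _ e2; have [N2 H2] := h2 _ e2.
exists (maxn N1 N2) => k hk.
have := H1 k (leq_trans (leq_maxl _ _) hk); have := H2 k (leq_trans (leq_maxr _ _) hk).
have : nrm (u k + v k - (l + m)) <= nrm (u k - l) + nrm (v k - m).
  by apply: le_trans (nrmD HC _ _); rewrite addrACA opprD.
lra.
Qed.

Lemma cv_const c : cv (fun _ => c) c.
Proof. by move=> e e0; exists 0%N => m _; rewrite subrr (nrm0 HC). Qed.

Lemma cvM u v l m : cv u l -> cv v m -> cv (fun k => u k * v k) (l * m).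
Proof.
move=> h1 h2 e e0.
set K := 1 + nrm l + nrm m.
have K0 : 0 < K by have := nrm_ge0 HC l; have := nrm_ge0 HC m; rewrite /K; lra.
set d := e / (K + e).
have d0 : 0 < d by rewrite /d divr_gt0 //; lra.
have d1 : d < 1 by rewrite /d ltr_pdivrMr; lra.
have dK : d * K < e.
  rewrite /d mulrAC ltr_pdivrMr; last lra.
  by rewrite ltr_pM2l //; lra.
have [N1 H1] := h1 _ d0; have [N2 H2] := h2 _ d0.
exists (maxn N1 N2) => k hk.
have a1 := H1 k (leq_trans (leq_maxl _ _) hk).
have a2 := H2 k (leq_trans (leq_maxr _ _) hk).
have E : u k * v k - l * m = (u k - l) * (v k - m) + (u k - l) * m + l * (v k - m) by ring.
rewrite E.
have b1 : nrm ((u k - l) * (v k - m)) <= d * d.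
  apply: le_trans (nrmM HC _ _) _.
  by apply: ler_pM; [exact: (nrm_ge0 HC)|exact: (nrm_ge0 HC)|exact: ltW|exact: ltW].
have b2 : nrm ((u k - l) * m) <= d * nrm m.
  by apply: le_trans (nrmM HC _ _) _; apply: ler_wpM2r; [exact: (nrm_ge0 HC)|exact: ltW].
have b3 : nrm (l * (v k - m)) <= nrm l * d.
  by apply: le_trans (nrmM HC _ _) _; apply: ler_wpM2l; [exact: (nrm_ge0 HC)|exact: ltW].
have t := nrmD HC ((u k - l) * (v k - m) + (u k - l) * m) (l * (v k - m)).
have t2 := nrmD HC ((u k - l) * (v k - m)) ((u k - l) * m).
have : d * d + d * nrm m + nrm l * d < d * K.
  rewrite /K mulrDr mulrDr mulr1 (mulrC (nrm l)).
  have := mulr_gt0 d0 d0; have : d * d < d * 1 by rewrite ltr_pM2l.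
  lra.
lra.
Qed.

Lemma cv_star u l : cv u l -> cv (fun k => star (u k)) (star l).
Proof. by move=> h e e0; have [N HN] := h e e0; exists N => m hm; rewrite -(starB HC) (nrm_star HC); apply: HN. Qed.

Lemma dom_cv (y : nat -> A) (r : nat -> R) B :
  (forall k, r k <= r k.+1) -> (forall k, r k <= B) ->
  (forall k m, (k <= m)%N -> nrm (y m - y k) <= r m - r k) ->
  exists l, cv y l.
Proof.
move=> inc bnd dom; apply: (nrm_complete HC) => e e0.
have e2 : 0 < e / 2%:R by lra.
have [N HN] := mono_cauchy_real inc bnd e2.
exists N => m p hm hp.
have := dom N m hm; have := dom N p hp; have := HN m hm; have := HN p hp.
have t : nrm (y m - y p) <= nrm (y m - y N) + nrm (y N - y p).
  by have := nrmD HC (y m - y N) (y N - y p); rewrite addrA subrK.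
rewrite (nrmB HC (y N)) in t.
lra.
Qed.

End Lim.
Section Sqrt.
Variable R : realType.
Local Notation C := R[i].
Variables (A : comAlgType C) (star : A -> A) (nrm : A -> R).
Hypothesis HC : is_CStar star nrm.
Local Notation cv := (cvg_in nrm).

Lemma half_norm : `|2^-1 : R| = 2^-1.
Proof. by rewrite ger0_norm // invr_ge0 ler0n. Qed.

Lemma rA_half2 : rA (2^-1 : R) + rA (2^-1) = 1 :> A.
Proof. rewrite -rA_add. have -> : (2^-1 + 2^-1 : R) = 1 by lra. exact: rA1. Qed.

Lemma sqrt_lemma h : star h = h -> nrm h <= 1 ->
  exists b, [/\ star b = b, 1 - h = b * b & (nrm h <= 2^-1 -> nrm (1 - b) <= 2^-1)].
Proof.
move=> hsa h1.
set a : A := rA (2^-1 : R).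
pose f := fun z : A => a * (h + z * z).
pose y := fun k => iter k f 0.
pose g := fun t : R => 2^-1 * (1 + t * t).
pose r := fun k => iter k g 0.
have r01 : forall k, 0 <= r k <= 1.
  elim=> [|k IH] /=; first by lra.
  rewrite /g; move: IH; rewrite -/(r k) => /andP [a0 a1].
  by move: (r k) a0 a1 => t a0 a1; apply/andP; split; nra.
have rinc : forall k, r k <= r k.+1.
  move=> k; have /andP [a0 a1] := r01 k; rewrite /= -/(r k) /g.
  move: (r k) a0 a1 => t a0 a1.
  have : 0 <= (1 - t) * (1 - t) by nra.
  lra.
have rb : forall k, r k <= 1 by move=> k; have /andP [] := r01 k.
have sa : forall k, star (y k) = y k.
  elim=> [|k IH] /=; first exact: star0 HC.
  rewrite -/(y k) /f (starM HC) (star_rA HC) (starD HC) (starM HC) IH hsa.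
  by rewrite mulrC.
have nrma : forall z, nrm (a * z) = 2^-1 * nrm z.
  by move=> z; rewrite /a (nrm_rAM HC) half_norm.
have yb : forall k, nrm (y k) <= r k.
  elim=> [|k IH] /=; first by rewrite (nrm0 HC).
  rewrite -/(y k) -/(r k) /f /g nrma ler_pM2l; last by rewrite invr_gt0 ltr0n.
  apply: le_trans (nrmD HC _ _) _; apply: lerD => //.
  apply: le_trans (nrmM HC _ _) _.
  by apply: ler_pM => //; exact: nrm_ge0 HC _.
have dom : forall k m, (k <= m)%N -> nrm (y m - y k) <= r m - r k.
  elim=> [|k IH] m km.
    by rewrite /= subr0 subr0; apply: yb.
  case: m km => // m km.
  have E : y m.+1 - y k.+1 = a * ((y m - y k) * (y m + y k)).
    by rewrite /= -/(y m) -/(y k) /f; ring.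
  have Er : r m.+1 - r k.+1 = 2^-1 * ((r m - r k) * (r m + r k)).
    by rewrite /= -/(r m) -/(r k) /g; ring.
  rewrite E Er nrma ler_pM2l; last by rewrite invr_gt0 ltr0n.
  apply: le_trans (nrmM HC _ _) _.
  apply: ler_pM; [exact: nrm_ge0 HC _|exact: nrm_ge0 HC _|exact: IH|].
  by apply: le_trans (nrmD HC _ _) _; apply: lerD.
have [Y cY] := dom_cv HC rinc rb dom.
have saY : star Y = Y.
  apply: (cv_uniq HC (cv_star HC cY)).
  by apply: cv_ext cY => k; rewrite sa.
have fixY : Y = a * (h + Y * Y).
  apply: (cv_uniq HC (cv_shift cY)).
  apply: cv_ext (cvM HC (cv_const HC a) (cvD HC (cv_const HC h) (cvM HC cY cY))) => k.
  by [].
have YY : Y + Y = h + Y * Y.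
  by rewrite {1 2}fixY -mulrDl rA_half2 mul1r.
exists (1 - Y); split.
- by rewrite (starB HC) (star1 HC) saY.
- apply/eqP; rewrite -subr_eq0.
  have -> : 1 - h - (1 - Y) * (1 - Y) = (Y + Y) - (h + Y * Y) by ring.
  by rewrite YY subrr.
- move=> hh; rewrite opprB addrC subrK.
  apply: (cv_le HC _ cY); elim=> [|k IH] /=; first by rewrite (nrm0 HC); lra.
  rewrite -/(y k) /f nrma.
  have : nrm (h + y k * y k) <= 2^-1 + 2^-1 * 2^-1.
    apply: le_trans (nrmD HC _ _) _; apply: lerD => //.
    apply: le_trans (nrmM HC _ _) _.
    by apply: ler_pM => //; exact: nrm_ge0 HC _.
  have := nrm_ge0 HC (h + y k * y k); nra.
Qed.

End Sqrt.
Section Pos.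
Variable R : realType.
Local Notation C := R[i].
Variables (A : comAlgType C) (star : A -> A) (nrm : A -> R).
Hypothesis HC : is_CStar star nrm.
Local Notation cv := (cvg_in nrm).

Definition Iu : A := 'i%C *: 1.

Lemma Iu2 : Iu * Iu = -1.
Proof.
rewrite /Iu -scalerAl mul1r scalerA.
have -> : ('i%C * 'i%C : C) = -1 by rewrite -expr2 sqr_i.
by rewrite scaleN1r.
Qed.

Lemma star_Iu : star Iu = - Iu.
Proof.
rewrite /Iu (starZ HC) (star1 HC) -scaleNr; congr (_ *: _).
by apply/eqP; rewrite eq_complex /= oppr0 !eqxx.
Qed.

Lemma nrm_Iu x : nrm (Iu * x) = nrm x.
Proof.
rewrite /Iu -scalerAl mul1r (nrmZ HC).
by rewrite /cabs /= expr1n expr0n /= add0r sqrtr1 mul1r.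
Qed.

Lemma Mprime z e : star z = z -> star e = e -> z * z + e * e = 1 -> nrm e <= 1.
Proof.
move=> hz he h.
set u := z + Iu * e.
have su : star u = z - Iu * e.
  by rewrite /u (starD HC) (starM HC) hz he star_Iu; ring.
have uu : star u * u = 1.
  rewrite su /u; have -> : (z - Iu * e) * (z + Iu * e) = z * z - (Iu * Iu) * (e * e) by ring.
  by rewrite Iu2 mulN1r opprK.
have nu : nrm u <= 1.
  have := nrmCS HC u; rewrite uu (nrm1 HC) => h1.
  have := nrm_ge0 HC u; move: h1; move: (nrm u) => t; nra.
have E : u - star u = Iu * (rA (1 + 1) * e).
  by rewrite su /u rA_add rA1; ring.
have := nrmD HC u (- star u); rewrite E nrm_Iu (nrm_rAM HC) (nrmN HC) (nrm_star HC).
rewrite ger0_norm; last lra.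
lra.
Qed.

Lemma neumann Y : star Y = Y -> nrm Y <= 2^-1 ->
  exists w, [/\ star w = w, (1 - Y) * w = 1 & nrm w <= 2%:R].
Proof.
move=> hsa hY.
pose f := fun z : A => 1 + Y * z.
pose y := fun k => iter k f 0.
pose g := fun t : R => 1 + 2^-1 * t.
pose r := fun k => iter k g 0.
have r02 : forall k, 0 <= r k <= 2%:R.
  elim=> [|k IH] /=; first by lra.
  rewrite /g; move: IH; rewrite -/(r k) => /andP [a0 a1].
  by move: (r k) a0 a1 => t a0 a1; apply/andP; split; lra.
have rinc : forall k, r k <= r k.+1.
  move=> k; have /andP [a0 a1] := r02 k; rewrite /= -/(r k) /g.
  by move: (r k) a0 a1 => t a0 a1; lra.
have rb : forall k, r k <= 2%:R by move=> k; have /andP [] := r02 k.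
have sa : forall k, star (y k) = y k.
  elim=> [|k IH] /=; first exact: star0 HC.
  rewrite -/(y k) /f (starD HC) (star1 HC) (starM HC) IH hsa.
  by rewrite mulrC.
have nY : forall z, nrm (Y * z) <= 2^-1 * nrm z.
  move=> z; apply: le_trans (nrmM HC _ _) _.
  by apply: ler_wpM2r; [exact: nrm_ge0 HC _|].
have yb : forall k, nrm (y k) <= r k.
  elim=> [|k IH] /=; first by rewrite (nrm0 HC).
  rewrite -/(y k) -/(r k) /f /g.
  apply: le_trans (nrmD HC _ _) _; rewrite (nrm1 HC) lerD2l.
  apply: le_trans (nY _) _; rewrite ler_pM2l //; by rewrite invr_gt0 ltr0n.
have dom : forall k m, (k <= m)%N -> nrm (y m - y k) <= r m - r k.
  elim=> [|k IH] m km.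
    by rewrite /= subr0 subr0; apply: yb.
  case: m km => // m km.
  have E : y m.+1 - y k.+1 = Y * (y m - y k).
    by rewrite /= -/(y m) -/(y k) /f; ring.
  have Er : r m.+1 - r k.+1 = 2^-1 * (r m - r k).
    by rewrite /= -/(r m) -/(r k) /g; ring.
  rewrite E Er; apply: le_trans (nY _) _.
  by rewrite ler_pM2l ?IH // invr_gt0 ltr0n.
have [W cW] := dom_cv HC rinc rb dom.
have saW : star W = W.
  apply: (cv_uniq HC (cv_star HC cW)).
  by apply: cv_ext cW => k; rewrite sa.
have fixW : W = 1 + Y * W.
  apply: (cv_uniq HC (cv_shift cW)).
  by apply: cv_ext (cvD HC (cv_const HC 1) (cvM HC (cv_const HC Y) cW)) => k.
exists W; split => //.
- by rewrite mulrBl mul1r {1}fixW addrK.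
- by apply: (cv_le HC _ cW) => k; apply: le_trans (yb k) (rb k).
Qed.

Lemma sum_sq2 y b : star y = y -> star b = b -> nrm y <= 2^-1 -> nrm b <= 2^-1 ->
  exists g, star g = g /\ y * y + b * b = g * g.
Proof.
move=> sy sb ny nb.
have h14 : nrm (y * y) <= 2^-1.
  rewrite (nrm_sa_sq HC sy); have := nrm_ge0 HC y; move: (nrm y) ny => t ny t0.
  rewrite expr2; have : t * t <= 2^-1 * 2^-1 by apply: ler_pM.
  have : (2^-1 * 2^-1 : R) <= 2^-1 by rewrite ler_piMl // ?invr_ge0 ?ler0n // invf_le1 ?ler1n.
  lra.
have syy : star (y * y) = y * y by rewrite (starM HC) sy.
have hl1 : (2^-1 : R) <= 1 by lra.
have [s [ss es ns]] := sqrt_lemma HC syy (le_trans h14 hl1).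
have ns1 : nrm s <= 1.
  by apply: (Mprime sy ss); rewrite -es addrC subrK.
have s1 : star (1 - s) = 1 - s by rewrite (starB HC) (star1 HC) ss.
have [w [sw ew nw]] := neumann s1 (ns h14).
rewrite opprB addrC subrK in ew.
set q := b * w.
have sq : star q = q by rewrite /q (starM HC) sw sb mulrC.
have nq : nrm q <= 1.
  apply: le_trans (nrmM HC _ _) _.
  have := nrm_ge0 HC b; have := nrm_ge0 HC w.
  move: (nrm b) (nrm w) nb nw => t1 t2 nb nw t2p t1p.
  have : t1 * t2 <= 2^-1 * 2%:R by apply: ler_pM.
  lra.
have nqq : nrm (q * q) <= 1.
  rewrite (nrm_sa_sq HC sq); have := nrm_ge0 HC q; move: (nrm q) nq => t nq t0; nra.
have sqq : star (q * q) = q * q by rewrite (starM HC) sq.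
have [t [st et _]] := sqrt_lemma HC sqq nqq.
have nt : nrm t <= 1 by apply: (Mprime sq st); rewrite -et addrC subrK.
set e := s * t.
have se : star e = e by rewrite /e (starM HC) ss st mulrC.
have ne : nrm (e * e) <= 1.
  rewrite (nrm_sa_sq HC se); have : nrm e <= 1.
    apply: le_trans (nrmM HC _ _) _.
    have := nrm_ge0 HC s; have := nrm_ge0 HC t.
    move: (nrm s) (nrm t) ns1 nt => t1 t2 nb1 nw1 t2p t1p.
    have : t1 * t2 <= 1 * 1 by apply: ler_pM.
    lra.
  have := nrm_ge0 HC e; move: (nrm e) => x x0 x1; nra.
have see : star (e * e) = e * e by rewrite (starM HC) se.
have [G [sG eG _]] := sqrt_lemma HC see ne.
exists G; split => //; rewrite -eG.
have -> : e * e = (s * s) * (t * t) by rewrite /e; ring.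
rewrite -et.
have -> : s * s * (1 - q * q) = s * s - (s * w) * (s * w) * (b * b) by rewrite /q; ring.
rewrite ew mulr1 mul1r -es; ring.
Qed.

Definition Pos (p : A) := exists g, star g = g /\ p = g * g.

Lemma Pos_sq g : star g = g -> Pos (g * g).
Proof. by move=> h; exists g. Qed.

Lemma Pos0 : Pos 0.
Proof. by exists 0; rewrite (star0 HC) mulr0. Qed.

Lemma Pos_sa p : Pos p -> star p = p.
Proof. by case=> g [sg ->]; rewrite (starM HC) sg. Qed.

Lemma Pos_cpos p : Pos p -> cpos star p.
Proof. by case=> g [sg ->]; exists g; rewrite sg. Qed.

Lemma Pos_scale r p : 0 <= r -> Pos p -> Pos (rA r * p).
Proof.
move=> r0 [g [sg ->]]; exists (rA (Num.sqrt r) * g); split.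
  by rewrite (starM HC) (star_rA HC) sg mulrC.
have -> : rA (Num.sqrt r) * g * (rA (Num.sqrt r) * g) = rA (Num.sqrt r * Num.sqrt r) * (g * g).
  by rewrite rA_mul; ring.
by rewrite -[Num.sqrt r * _]expr2 sqr_sqrtr.
Qed.

Lemma Pos_add p q : Pos p -> Pos q -> Pos (p + q).
Proof.
move=> [g [sg ->]] [f [sf ->]].
set D := nrm g + nrm f + 1.
have D0 : 0 < D by have := nrm_ge0 HC g; have := nrm_ge0 HC f; rewrite /D; lra.
set l := 2^-1 / D.
have l0 : 0 < l by rewrite /l divr_gt0 // invr_gt0 ltr0n.
have bnd : forall x, 0 <= x <= D -> l * x <= 2^-1.
  move=> x /andP [x0 xD]; rewrite /l mulrAC ler_pdivrMr //.
  by rewrite ler_pM2l // invr_gt0 ltr0n.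
have nl : forall x, nrm (rA l * x) = l * nrm x.
  by move=> x; rewrite (nrm_rAM HC) ger0_norm // ltW.
have sl : forall x, star x = x -> star (rA l * x) = rA l * x.
  by move=> x sx; rewrite (starM HC) (star_rA HC) sx mulrC.
have [G [sG eG]] : exists G, star G = G /\
    (rA l * g) * (rA l * g) + (rA l * f) * (rA l * f) = G * G.
  apply: sum_sq2; rewrite ?sl // nl bnd //; apply/andP; split; rewrite ?nrm_ge0 //;
    by have := nrm_ge0 HC g; have := nrm_ge0 HC f; rewrite /D; lra.
exists (rA (l^-1) * G); split.
  by rewrite (starM HC) (star_rA HC) sG mulrC.
have lnz : l != 0 by rewrite gt_eqF.
transitivity (rA (l^-1 * l * (l^-1 * l)) * (g * g + f * f)).
  by rewrite mulVf // mulr1 rA1 mul1r.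
by rewrite (rA_mul A (l^-1 * l)) (rA_mul A (l^-1) l); transitivity (rA l^-1 * rA l^-1 * (G * G)); [rewrite -eG|]; ring.
Qed.

Lemma Pos_sum (I : Type) (s : seq I) (P : pred I) (F : I -> A) :
  (forall i, P i -> Pos (F i)) -> Pos (\sum_(i <- s | P i) F i).
Proof. by move=> h; apply: big_ind => //; [exact: Pos0|exact: Pos_add]. Qed.

Lemma Pos_starmul a : Pos (star a * a).
Proof.
set h : A := rA (2^-1 : R).
set x := h * (a + star a).
set y := Iu * (h * (a - star a)).
have sh : star h = h by rewrite /h (star_rA HC).
have sx : star x = x.
  by rewrite /x (starM HC) sh (starD HC) (starK HC) mulrC addrC.
have sy : star y = y.
  by rewrite /y (starM HC) star_Iu (starM HC) sh (starB HC) (starK HC); ring.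
have -> : star a * a = x * x + y * y.
  have -> : x * x + y * y = h * h * ((a + star a) * (a + star a) + (Iu * Iu) * ((a - star a) * (a - star a))).
    by rewrite /x /y; ring.
  rewrite Iu2.
  have -> : h * h * ((a + star a) * (a + star a) + -1 * ((a - star a) * (a - star a)))
     = (h + h) * (h + h) * (star a * a) by ring.
  by rewrite /h rA_half2 !mul1r.
by apply: Pos_add; apply: Pos_sq.
Qed.

Lemma Pos_mulstar a : Pos (a * star a).
Proof. by rewrite mulrC; apply: Pos_starmul. Qed.

End Pos.
Lemma exch4 (A : zmodType) (n d : nat) (F : 'I_n -> 'I_n -> 'I_d -> 'I_d -> A) :
  \sum_(j < n) \sum_(k < n) \sum_(i < d) \sum_(l < d) F j k i l =
  \sum_(i < d) \sum_(l < d) \sum_(j < n) \sum_(k < n) F j k i l.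
Proof.
under eq_bigr => j _ do rewrite exchange_big.
under eq_bigr => j _ do under eq_bigr => i _ do rewrite exchange_big.
rewrite exchange_big.
by under eq_bigr => i _ do rewrite exchange_big.
Qed.

Lemma normgap (R : realType) (A : comAlgType R[i]) (star : A -> A) (nrm : A -> R)
  (HC : is_CStar star nrm) (M : A) : star M = M -> Pos star (rA (nrm M) - M).
Proof.
move=> sM.
case: (eqVneq (nrm M) 0) => [m0|m0].
  by rewrite m0 (nrm_eq0 HC m0) rA0 subrr; apply: Pos0 HC.
have mp : 0 < nrm M by rewrite lt_def m0 (nrm_ge0 HC).
set h := rA (nrm M)^-1 * M.
have sh : star h = h by rewrite /h (starM HC) (star_rA HC) sM mulrC.
have nh : nrm h <= 1.
  by rewrite /h (nrm_rAM HC) ger0_norm ?invr_ge0 ?(nrm_ge0 HC) // mulVf.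
have [b [sb eb _]] := sqrt_lemma HC sh nh.
have -> : rA (nrm M) - M = rA (nrm M) * (1 - h).
  rewrite /h mulrBr mulr1 mulrA -rA_mul mulfV // rA1 mul1r //.
rewrite eb; apply: (Pos_scale HC); first exact: nrm_ge0 HC _.
exact: Pos_sq.
Qed.

Unset Implicit Arguments.
Set Strict Implicit.

Theorem proposition3p4 (R : realType) (A : comAlgType R[i]) (star : A -> A)
  (nrm : A -> R) (E : lmodType A) (ip : E -> E -> A) (d n : nat)
  (tau : 'I_n -> E) :
  is_CStar star nrm ->
  ((W_star nrm /\ sigma_finite star) \/ AW_star star nrm) ->
  hilbert_module star nrm ip ->
  has_rank ip d ->
  (forall j, ip (tau j) (tau j) = 1) ->
  [/\ nrm (MFP ip tau) <= n%:R ^+ 2,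
      cle star (MFP ip tau) (rA (nrm (MFP ip tau))) &
      cle star (rA (n%:R ^+ 2 / d%:R)) (MFP ip tau)].
Proof.
move=> HC _ [ipl [ipc _]] [w [_ wexp]] tau1.
have ip0 : forall z, ip 0 z = 0.
  move=> z; have := ipl 1 0 0 z; rewrite scaler0 addr0 mul1r => h.
  by apply: (addrI (ip 0 z)); rewrite -h addr0.
have ipZ : forall a x z, ip (a *: x) z = a * ip x z.
  by move=> a x z; have := ipl a x 0 z; rewrite addr0 ip0 addr0.
have ipD : forall x y z, ip (x + y) z = ip x z + ip y z.
  by move=> x y z; have := ipl 1 x y z; rewrite scale1r mul1r.
have ip_sum : forall (c : 'I_d -> A) z,
    ip (\sum_(i < d) c i *: w i) z = \sum_(i < d) c i * ip (w i) z.
  move=> c z; elim/big_rec2: _ => [|i y1 y2 _ <-]; first exact: ip0.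
  by rewrite ipD ipZ.
pose x j i := ip (tau j) (w i).
have aexp : forall j k, ip (tau j) (tau k) = \sum_(i < d) x j i * star (x k i).
  move=> j k; rewrite [in LHS](wexp (tau j)) ip_sum; apply: eq_bigr => i _.
  by rewrite (ipc (tau k) (w i)).
(* Cauchy-Schwarz *)
have cs : forall j k, nrm (ip (tau j) (tau k)) <= 1.
  move=> j k; set a := ip (tau j) (tau k).
  have sa : star a = ip (tau k) (tau j) by rewrite /a (ipc (tau j) (tau k)).
  have E1 : 1 - a * star a = \sum_(i < d) (x j i - a * x k i) * star (x j i - a * x k i).
    have -> : \sum_(i < d) (x j i - a * x k i) * star (x j i - a * x k i) =
      \sum_(i < d) x j i * star (x j i) - star a * \sum_(i < d) x j i * star (x k i)
      - a * \sum_(i < d) x k i * star (x j i) + a * star a * \sum_(i < d) x k i * star (x k i).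
      rewrite !mulr_sumr -!sumrB -big_split /=; apply: eq_bigr => i _.
      by rewrite (starB HC) (starM HC); ring.
    by rewrite -!aexp (tau1 j) (tau1 k) -/a -sa mulr1 subrK mulrC.
  have P1 : Pos star (1 - a * star a).
    by rewrite E1; apply: (Pos_sum HC) => i _; apply: (Pos_mulstar HC).
  have [g1 [sg1 eg1]] := Pos_mulstar HC a.
  have [g2 [sg2 eg2]] := P1.
  have ng1 : nrm g1 <= 1.
    by apply: (Mprime HC sg2 sg1); rewrite -eg1 -eg2 subrK.
  have : nrm a ^+ 2 <= 1.
    rewrite -(nrmCS HC) mulrC eg1 (nrm_sa_sq HC sg1).
    by have := nrm_ge0 HC g1; move: (nrm g1) ng1 => t t1 t0; rewrite expr2; nra.
  by have := nrm_ge0 HC a; move: (nrm a) => t t0; rewrite expr2; nra.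
pose T i l := \sum_(j < n) x j i * star (x j l).
have MFPe : MFP ip tau = \sum_(i < d) \sum_(l < d) T i l * star (T i l).
  rewrite /MFP.
  transitivity (\sum_(j < n) \sum_(k < n) \sum_(i < d) \sum_(l < d)
      (x j i * star (x k i)) * (x k l * star (x j l))).
    apply: eq_bigr => j _; apply: eq_bigr => k _.
    by rewrite !aexp mulr_suml; apply: eq_bigr => i _; rewrite mulr_sumr.
  rewrite exch4; apply: eq_bigr => i _; apply: eq_bigr => l _.
  rewrite /T (star_sum HC) mulr_suml; apply: eq_bigr => j _.
  rewrite mulr_sumr; apply: eq_bigr => k _.
  by rewrite (starM HC) (starK HC); ring.
have PM : Pos star (MFP ip tau).
  rewrite MFPe; apply: (Pos_sum HC) => i _; apply: (Pos_sum HC) => l _.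
  exact: (Pos_mulstar HC).
have sM := Pos_sa HC PM.
split.
- rewrite /MFP; apply: le_trans (nrm_sum HC _ _ _) _.
  rewrite -[_ ^+ 2](_ : \sum_(j < n) \sum_(k < n) (1:R) = _); last first.
    by rewrite !sumr_const !card_ord expr2 mulr_natr.
  apply: ler_sum => j _; apply: le_trans (nrm_sum HC _ _ _) _.
  apply: ler_sum => k _; apply: le_trans (nrmM HC _ _) _.
  rewrite -[1 : R]mulr1; apply: ler_pM; rewrite ?cs //; exact: nrm_ge0 HC _.
- split => //; first exact: star_rA HC _.
  by apply: Pos_cpos; have h := normgap HC sM; exact h.
split => //; first exact: star_rA HC _.
apply: Pos_cpos.
case: (posnP d) => [d0|dp].
  by rewrite d0 invr0 mulr0 rA0 subr0.
have dnz : (d%:R : R) != 0 by rewrite pnatr_eq0 -lt0n.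
have key : (n%:R ^+ 2 / d%:R : R) = (n%:R / d%:R) * (n%:R + n%:R)
    - (n%:R / d%:R) * (n%:R / d%:R) * d%:R.
  by field.
have sumT : \sum_(i < d) T i i = n%:R.
  rewrite /T exchange_big /=.
  transitivity (\sum_(j < n) (1 : A)).
    by apply: eq_bigr => j _; rewrite -aexp tau1.
  by rewrite sumr_const card_ord.
have sumTs : \sum_(i < d) star (T i i) = n%:R.
  by rewrite -(star_sum HC) sumT -rA_nat (star_rA HC).
have split1 : MFP ip tau = \sum_(i < d) T i i * star (T i i)
    + \sum_(i < d) \sum_(l < d | l != i) T i l * star (T i l).
  by rewrite MFPe -big_split /=; apply: eq_bigr => i _; rewrite (bigD1 i).
rewrite key; move: (n%:R / d%:R : R) => c.
rewrite rA_add rA_opp !rA_mul rA_add !rA_nat.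
have sq : \sum_(i < d) (T i i - rA c) * star (T i i - rA c) =
   \sum_(i < d) T i i * star (T i i) - rA c * (n%:R + n%:R) + rA c * rA c * d%:R.
  rewrite -{1}sumT -sumTs.
  rewrite (_ : rA c * rA c * d%:R = \sum_(i < d) rA c * rA c); last first.
    by rewrite sumr_const card_ord mulr_natr.
  rewrite mulrDr !mulr_sumr opprD addrA -!sumrB -big_split /=.
  apply: eq_bigr => i _; rewrite (starB HC) (star_rA HC); ring.
rewrite split1.
set S0 := \sum_(i < d) T i i * star (T i i).
set S1 := \sum_(i < d) \sum_(l < d | l != i) T i l * star (T i l).
have -> : S0 + S1 - (rA c * (n%:R + n%:R) + - (rA c * rA c * d%:R)) =
   (S0 - rA c * (n%:R + n%:R) + rA c * rA c * d%:R) + S1 by ring.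
rewrite -sq; apply: (Pos_add HC).
  by apply: (Pos_sum HC) => i _; exact: (Pos_mulstar HC).
by apply: (Pos_sum HC) => i _; apply: (Pos_sum HC) => l _; exact: (Pos_mulstar HC).
Qed.
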